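(* Let $r_n$ ($n\ge0$) denote the parity of the number of runs of $1$'s in the binary representation of $n$. Then the infinite word $r_0r_1r_2\cdots$ contains no fifth power: there is no nonempty finite word $X$ over $\{0,1\}$ such that $XXXXX$ occurs as a block of consecutive terms $r_a r_{a+1}\cdots r_{a+5|X|-1}$ for some $a\ge0$.
   Context: A run of $1$'s in the binary representation of $n$ is a maximal block of consecutive binary digits equal to $1$; parity means the number modulo $2$. *)

(* Defs.v *)
From mathcomp Require Import all_boot.
Set Implicit Arguments. Unset Strict Implicit. Unset Printing Implicit Defensive.

Fixpoint bits_aux (fuel n : nat) : seq bool :=
  match fuel with
  | 0 => [::]
  | fuel'.+1 => if n == 0 then [::] else odd n :: bits_aux fuel' n./2
  end.
Definition bits (n : nat) : seq bool := bits_aux n n.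

(* Number of maximal blocks of consecutive 1's in a bit sequence:
   count positions holding a 1 that are not preceded by a 1. *)
Fixpoint runs_aux (prev : bool) (s : seq bool) : nat :=
  match s with
  | [::] => 0
  | b :: s' => (b && ~~ prev) + runs_aux b s'
  end.
Definition runs1 (n : nat) : nat := runs_aux false (bits n).

Definition r (n : nat) : bool := odd (runs1 n).

(* Main.v *)
Require Import Defs.
From mathcomp Require Import all_boot.
From mathcomp Require Import zify.

Lemma bits_aux_eq f g n : n <= f -> n <= g -> bits_aux f n = bits_aux g n.
Proof.
elim: f g n => [|f IH] [|g] n /=.
- by [].
- by rewrite leqn0 => /eqP -> _.
- by move=> _; rewrite leqn0 => /eqP ->.
- move=> hf hg; case: eqP => // /eqP hn; congr (_ :: _); apply: IH; lia.
Qed.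

Lemma bits_cons n : 0 < n -> bits n = odd n :: bits n./2.
Proof.
move=> hn; rewrite /bits; case: n hn => // n _ /=.
congr (_ :: _); apply: bits_aux_eq; lia.
Qed.

Lemma runs_aux_ft s : runs_aux false s = runs_aux true s + head false s.
Proof. case: s => //= b s; case: b => /=; lia. Qed.

Lemma head_bits n : head false (bits n) = odd n.
Proof. case: n => // n; by rewrite bits_cons. Qed.

Lemma r_even n : r (2 * n) = r n.
Proof.
case: n => // n; rewrite /r /runs1 bits_cons; last lia.
have -> : (2 * n.+1)./2 = n.+1 by lia.
by have -> : odd (2 * n.+1) = false by rewrite oddM.
Qed.

Lemma r_odd n : r (2 * n + 1) = r n (+) ~~ odd n.
Proof.
rewrite /r /runs1 bits_cons; last lia.
have -> : (2 * n + 1)./2 = n by lia.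
have -> : odd (2 * n + 1) = true by rewrite oddD oddM.
rewrite /= [runs_aux false (bits n)]runs_aux_ft head_bits.
rewrite !oddD; move: (odd n) (odd (runs_aux true (bits n))) => [] [].
all: by [].
Qed.

Definition e j := r j (+) r j.+1.

Lemma e0 m : e (4 * m) = true.
Proof.
rewrite /e.
have -> : (4 * m).+1 = 2 * (2 * m) + 1 by lia.
have -> : 4 * m = 2 * (2 * m) by lia.
by rewrite r_odd r_even oddM /= addbA addbb.
Qed.

Lemma e2 m : e (4 * m + 2) = false.
Proof.
rewrite /e.
have -> : 4 * m + 2 = 2 * (2 * m + 1) by lia.
have -> : (2 * (2 * m + 1)).+1 = 2 * (2 * m + 1) + 1 by lia.
by rewrite r_odd r_even oddD oddM /=; case: (r _).
Qed.

Lemma e1 k : e (4 * k + 1) = odd k.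
Proof.
rewrite /e.
have -> : (4 * k + 1).+1 = 2 * (2 * k + 1) by lia.
have -> : 4 * k + 1 = 2 * (2 * k) + 1 by lia.
rewrite (r_odd (2 * k)) (r_even (2 * k + 1)) (r_odd k) (r_even k).
rewrite ?oddD ?oddM /=.
by case: (r k); case: (odd k).
Qed.

Definition per a p L := forall i, i + p < L -> r (a + i) = r (a + i + p).

Lemma per_e a p L j : per a p L -> a <= j -> j.+1 + p < a + L -> e j = e (j + p).
Proof.
move=> h h1 h2; rewrite /e.
have := h (j - a) ltac:(lia); have := h (j.+1 - a) ltac:(lia).
have -> : a + (j - a) = j by lia.
have -> : a + (j.+1 - a) = j.+1 by lia.
have -> : (j + p).+1 = j.+1 + p by lia.
by move=> -> ->.
Qed.

Lemma odd_case a p : odd p -> 1 < p -> ~ per a p (5 * p).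
Proof.
move=> hp hp1 h.
set m := (a + 3) %/ 4.
have hm1 : a <= 4 * m by rewrite /m; lia.
have hm2 : 4 * m <= a + 3 by rewrite /m; lia.
have E j : 4 * m <= j <= 4 * m + 6 -> e j = e (j + p).
  move=> /andP [h1 h2]; apply: (@per_e a p (5 * p) j h); lia.
set s := 4 * m + p.
have hs : odd s by rewrite /s oddD oddM.
have [k [hk|hk]] : exists k, s = 4 * k + 1 \/ s + 2 = 4 * k + 1.
  exists ((s + 1) %/ 4); move: hs; rewrite -(odd_mod s (erefl : odd 4 = false)) => hs.
  have h4 : s %% 4 = 1 \/ s %% 4 = 3.
    move: hs (ltn_mod s 4); case: (s %% 4) => [|[|[|[|n]]]] //= _ _; by [left|right].
  lia.
- have A := E (4 * m) ltac:(lia).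
  have B := E (4 * (m + 1)) ltac:(lia).
  rewrite e0 -/s hk e1 in A; rewrite e0 in B.
  rewrite (_ : 4 * (m + 1) + p = 4 * (k + 1) + 1) in B; last lia.
  by rewrite e1 oddD -A in B.
- have A := E (4 * m + 2) ltac:(lia).
  have B := E (4 * (m + 1) + 2) ltac:(lia).
  rewrite (_ : 4 * m + 2 + p = 4 * k + 1) in A; last lia.
  rewrite (_ : 4 * (m + 1) + 2 + p = 4 * (k + 1) + 1) in B; last lia.
  rewrite e2 e1 in A; rewrite e2 e1 oddD -A in B.
  by [].
Qed.

Lemma one_case a : ~ per a 1 5.
Proof.
move=> h.
set m := (a + 3) %/ 4.
have hm1 : a <= 4 * m by rewrite /m; lia.
have hm2 : 4 * m <= a + 3 by rewrite /m; lia.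
have := h (4 * m - a) ltac:(lia).
have -> : a + (4 * m - a) = 4 * m by lia.
have := e0 m; rewrite /e addn1.
by case: (r _); case: (r _).
Qed.

Lemma even_case a q : per a (2 * q) (5 * (2 * q)) -> per ((a + 1) %/ 2) q (5 * q).
Proof.
move=> h i hi.
set b := (a + 1) %/ 2.
have hb1 : a <= 2 * b by rewrite /b; lia.
have hb2 : 2 * b <= a + 1 by rewrite /b; lia.
have := h (2 * (b + i) - a) ltac:(lia).
have -> : a + (2 * (b + i) - a) = 2 * (b + i) by lia.
have -> : 2 * (b + i) + 2 * q = 2 * (b + i + q) by lia.
by rewrite !r_even.
Qed.

Lemma main p : 0 < p -> forall a, ~ per a p (5 * p).
Proof.
elim: p {-2}p (leqnn p) => [|n IH] p hp p0 a; first lia.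
case hodd: (odd p).
- case: (ltnP 1 p) => hp1; first exact: odd_case.
  have -> : p = 1 by lia.
  exact: one_case.
- have [q hq] : exists q, p = 2 * q.
    exists p./2; move: hodd; rewrite -(odd_mod p (erefl : odd 2 = false)) => hodd.
    have : p %% 2 = 0 by move: hodd (ltn_mod p 2); case: (p %% 2) => [|[|n0]].
    lia.
  subst p => h; apply: (IH q _ _ ((a + 1) %/ 2)); first lia; first lia.
  exact: even_case.
Qed.

Theorem theorem6 :
  ~ exists (X : seq bool) (a : nat),
      0 < size X /\
      forall i, i < 5 * size X -> r (a + i) = nth false X (i %% size X).
Proof.
case=> X [a [hX h]]; apply: (@main _ hX a) => i hi.
rewrite -addnA h; last lia.
rewrite h; last lia.
by rewrite modnDr.
Qed.
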